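(* Let $\mathscr G=(V,\mathfrak E)$ be a subgraph of $(\mathbb Z^d,\mathfrak E_d)$, $d\ge2$, with positive weights $(w_e)_{e\in\mathfrak E}$, and let $\mathscr C=(V_{\mathscr C},\mathfrak E_{\mathscr C})$ be a subgraph of $\mathscr G$. Let $\nu,L\in(0,\infty)$ and $B\subseteq V$ satisfy: (i) there is $\mu>0$ such that $\mathcal E^{\boldsymbol w}_{\mathscr C}(f)\ge\mu\sum_{x\in V_{\mathscr C}}f(x)^2$ for all $f:V\to\mathbb R$ with $\mathrm{supp}\,f\subseteq B$; (ii) there is an injective map $\varphi:B\setminus V_{\mathscr C}\to V_{\mathscr C}$ such that for every $x\in B\setminus V_{\mathscr C}$ there is a self-avoiding directed path $l(x,\varphi(x))$ in $\mathscr G$ from $x$ to $\varphi(x)$ all of whose edges $e$ satisfy $w_e>\nu$ and whose length satisfies $|l(x,\varphi(x))|\le L$. Then for all $f:V\to\mathbb R$ with $\mathrm{supp}\,f\subseteq B$, $$\mathcal E^{\boldsymbol w}_{\mathscr G}(f)\ge\big((2L)^{d+1}\nu^{-1}+3\mu^{-1}\big)^{-1}\sum_{x\in V}f(x)^2.$$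
   Context: For an undirected graph $\mathscr G=(V,\mathfrak E)$ with weights $\boldsymbol w=(w_e)_{e\in\mathfrak E}$ and $f:V\to\mathbb R$, the Dirichlet energy on $\mathscr G$ is $\mathcal E^{\boldsymbol w}_{\mathscr G}(f)=\frac12\sum_{x\in V}\sum_{y\in V,\{x,y\}\in\mathfrak E}w_{xy}(f(x)-f(y))^2$. $(\mathbb Z^d,\mathfrak E_d)$ is the nearest-neighbour lattice. *)

(* Defs.v *)
From Stdlib Require Fin.
From Stdlib Require Import Reals List ZArith.
Import ListNotations.
Open Scope R_scope.

Definition pt (d : nat) : Type := Fin.t d -> Z.

Definition lattice_adj {d : nat} (x y : pt d) : Prop :=
  exists i : Fin.t d, Z.abs (x i - y i) = 1%Z /\ (forall j, j <> i -> x j = y j).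

(* A subgraph (V, E) of the nearest-neighbour lattice; E is a symmetric
   relation representing the set of undirected edges. *)
Definition lattice_subgraph {d : nat} (V : pt d -> Prop) (E : pt d -> pt d -> Prop) : Prop :=
  (forall x y, E x y -> E y x) /\
  (forall x y, E x y -> V x /\ V y /\ lattice_adj x y).

Definition subgraph {d : nat} (V' : pt d -> Prop) (E' : pt d -> pt d -> Prop)
  (V : pt d -> Prop) (E : pt d -> pt d -> Prop) : Prop :=
  (forall x, V' x -> V x) /\
  (forall x y, E' x y -> E x y) /\
  (forall x y, E' x y -> E' y x) /\
  (forall x y, E' x y -> V' x /\ V' y).

Definition lsum {X : Type} (h : X -> R) (S : list X) : R :=
  fold_right (fun a acc => h a + acc) 0 S.

(* For nonnegative terms, sums over possibly infinite index sets take values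
   in [0, +oo] and equal the supremum of finite partial sums.
   [nnsum_ge P g c Q h] expresses   sum_{P} g  >=  c * sum_{Q} h   in [0,+oo]:
   for every finite set S of Q-indices and eps > 0 there is a finite set T of
   P-indices with c * sum_S h <= sum_T g + eps. *)
Definition nnsum_ge {X Y : Type} (P : X -> Prop) (g : X -> R) (c : R)
  (Q : Y -> Prop) (h : Y -> R) : Prop :=
  forall S : list Y, NoDup S -> Forall Q S ->
  forall eps : R, 0 < eps ->
  exists T : list X, NoDup T /\ Forall P T /\ c * lsum h S <= lsum g T + eps.

(* Dirichlet energy E^w_{(V,E)}(f) = 1/2 sum_{x in V} sum_{y, {x,y} in E}
   w_xy (f x - f y)^2 : index set of ordered pairs and the summand. *)
Definition energy_index {d : nat} (V : pt d -> Prop) (E : pt d -> pt d -> Prop)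
  (p : pt d * pt d) : Prop := V (fst p) /\ E (fst p) (snd p).

Definition energy_term {d : nat} (w : pt d -> pt d -> R) (f : pt d -> R)
  (p : pt d * pt d) : R :=
  / 2 * w (fst p) (snd p) * (f (fst p) - f (snd p)) ^ 2.

Definition sq {d : nat} (f : pt d -> R) (x : pt d) : R := f x ^ 2.

Definition supp_in {d : nat} (f : pt d -> R) (B : pt d -> Prop) : Prop :=
  forall x, f x <> 0 -> B x.

(* l = [x0; ...; xn] is a self-avoiding directed path in (V,E) from x to y
   all of whose edges have weight > nu; its length is n = length l - 1. *)
Fixpoint path_edges_ok {d : nat} (E : pt d -> pt d -> Prop) (w : pt d -> pt d -> R)
  (nu : R) (l : list (pt d)) : Prop :=
  match l with
  | a :: ((b :: _) as t) => E a b /\ nu < w a b /\ path_edges_ok E w nu t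
  | _ => True
  end.

Definition good_path {d : nat} (E : pt d -> pt d -> Prop) (w : pt d -> pt d -> R)
  (nu : R) (x y : pt d) (l : list (pt d)) : Prop :=
  head l = Some x /\ last l x = y /\ l <> [] /\ NoDup l /\ path_edges_ok E w nu l.

(* Main.v *)
Require Import Defs.
From Stdlib Require Fin.
From Stdlib Require Import Reals List ZArith Lra Lia Psatz Permutation.
From Stdlib Require Import Classical ClassicalDescription FunctionalExtensionality ClassicalEpsilon IndefiniteDescription.
Import ListNotations.
Open Scope R_scope.

Definition cdec (P : Prop) : {P} + {~ P} := excluded_middle_informative P.

Section Gen.
Context {X : Type}.

Lemma lsum_nil (h : X -> R) : lsum h [] = 0.
Proof. reflexivity. Qed.

Lemma lsum_cons (h : X -> R) a l : lsum h (a :: l) = h a + lsum h l.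
Proof. reflexivity. Qed.

Lemma lsum_app (h : X -> R) l1 l2 : lsum h (l1 ++ l2) = lsum h l1 + lsum h l2.
Proof. induction l1; simpl; [lra|]. unfold lsum in *; simpl. rewrite IHl1; lra. Qed.

Lemma lsum_perm (h : X -> R) l1 l2 : Permutation l1 l2 -> lsum h l1 = lsum h l2.
Proof.
  induction 1; unfold lsum in *; simpl in *; try lra.
Qed.

Lemma lsum_nonneg (h : X -> R) l : (forall x, In x l -> 0 <= h x) -> 0 <= lsum h l.
Proof.
  induction l; intros H; unfold lsum in *; simpl in *; [lra|].
  pose proof (H a (or_introl eq_refl)). pose proof (IHl (fun x Hx => H x (or_intror Hx))). lra.
Qed.

Lemma lsum_le (h1 h2 : X -> R) l : (forall x, In x l -> h1 x <= h2 x) -> lsum h1 l <= lsum h2 l.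
Proof.
  induction l; intros H; unfold lsum in *; simpl in *; [lra|].
  pose proof (H a (or_introl eq_refl)). pose proof (IHl (fun x Hx => H x (or_intror Hx))). lra.
Qed.

Lemma lsum_ext (h1 h2 : X -> R) l : (forall x, In x l -> h1 x = h2 x) -> lsum h1 l = lsum h2 l.
Proof.
  induction l; intros H; unfold lsum in *; simpl in *; [lra|].
  rewrite (H a (or_introl eq_refl)). rewrite (IHl (fun x Hx => H x (or_intror Hx))). lra.
Qed.

Lemma lsum_plus (h1 h2 : X -> R) l : lsum (fun x => h1 x + h2 x) l = lsum h1 l + lsum h2 l.
Proof. induction l; unfold lsum in *; simpl in *; lra. Qed.

Lemma lsum_scal (c : R) (h : X -> R) l : lsum (fun x => c * h x) l = c * lsum h l.
Proof. induction l; unfold lsum in *; simpl in *; [lra|]. rewrite IHl; lra. Qed.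

Lemma lsum_scalr (c : R) (h : X -> R) l : lsum (fun x => h x * c) l = lsum h l * c.
Proof. induction l; unfold lsum in *; simpl in *; [lra|]. rewrite IHl; lra. Qed.

Lemma lsum_zero (h : X -> R) l : (forall x, In x l -> h x = 0) -> lsum h l = 0.
Proof.
  induction l; intros H; unfold lsum in *; simpl in *; [lra|].
  rewrite (H a (or_introl eq_refl)). rewrite (IHl (fun x Hx => H x (or_intror Hx))). lra.
Qed.

Lemma lsum_sub (h : X -> R) (D T : list X) : NoDup D ->
  (forall x, In x D -> h x = 0 \/ In x T) -> (forall x, In x T -> 0 <= h x) ->
  lsum h D <= lsum h T.
Proof.
  intros HD. revert T. induction HD as [|a D' Ha HD' IH]; intros T H1 H2.
  - apply lsum_nonneg; auto.
  - rewrite lsum_cons. destruct (H1 a (or_introl eq_refl)) as [Hz|Hin].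
    + rewrite Hz. assert (lsum h D' <= lsum h T); [|lra].
      apply IH; auto. intros x Hx; apply H1; simpl; auto.
    + destruct (in_split a T Hin) as [T1 [T2 ->]].
      rewrite (lsum_perm h (T1 ++ a :: T2) (a :: T1 ++ T2)).
      2: { symmetry. apply Permutation_middle. }
      rewrite lsum_cons. assert (lsum h D' <= lsum h (T1 ++ T2)); [|lra].
      apply IH.
      * intros x Hx. destruct (H1 x (or_intror Hx)) as [?|Hx2]; auto.
        right. apply in_app_or in Hx2. apply in_or_app. destruct Hx2 as [?|[->|?]]; auto.
        contradiction.
      * intros x Hx. apply H2. apply in_app_or in Hx. apply in_or_app. simpl. tauto.
Qed.

Lemma lsum_map {Y : Type} (h : Y -> R) (g : X -> Y) l : lsum h (map g l) = lsum (fun x => h (g x)) l.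
Proof. induction l; unfold lsum in *; simpl in *; [lra|]. rewrite IHl; lra. Qed.

Lemma lsum_swap {Y : Type} (F : X -> Y -> R) (l : list X) (T : list Y) :
  lsum (fun x => lsum (F x) T) l = lsum (fun p => lsum (fun x => F x p) l) T.
Proof.
  induction l.
  - simpl. induction T; unfold lsum in *; simpl in *; lra.
  - rewrite lsum_cons. rewrite IHl.
    clear IHl. induction T; unfold lsum in *; simpl in *; [lra|]. lra.
Qed.

Definition indp (P : Prop) : R := if cdec P then 1 else 0.

Lemma lsum_ind (g : X -> R) (D T : list X) : NoDup D -> NoDup T -> incl D T ->
  lsum g D = lsum (fun p => indp (In p D) * g p) T.
Proof.
  intros HD HT. revert D HD. induction HT as [|t T' Ht HT' IH]; intros D HD Hinc.
  - destruct D as [|a D]; [reflexivity|]. exfalso. apply (Hinc a); simpl; auto.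
  - rewrite lsum_cons. unfold indp at 1. destruct (cdec (In t D)) as [Hin|Hn].
    + destruct (in_split t D Hin) as [D1 [D2 ->]].
      rewrite (lsum_perm g (D1 ++ t :: D2) (t :: D1 ++ D2)).
      2: { symmetry. apply Permutation_middle. }
      rewrite lsum_cons.
      assert (HD' : NoDup (t :: D1 ++ D2)).
      { apply Permutation_NoDup with (D1 ++ t :: D2); auto. symmetry; apply Permutation_middle. }
      inversion HD' as [|? ? Hn' HD'']; subst.
      rewrite (IH (D1 ++ D2)); auto.
      * assert (lsum (fun p => indp (In p (D1 ++ D2)) * g p) T' =
                lsum (fun p => indp (In p (D1 ++ t :: D2)) * g p) T'); [|lra].
        apply lsum_ext. intros x Hx. unfold indp.
        destruct (cdec (In x (D1 ++ D2))) as [h1|h1]; destruct (cdec (In x (D1 ++ t :: D2))) as [h2|h2];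
          auto.
        -- exfalso. apply h2. apply in_app_or in h1; apply in_or_app; simpl; tauto.
        -- exfalso. apply h1. apply in_app_or in h2; apply in_or_app; simpl in h2.
           destruct h2 as [?|[->|?]]; tauto.
      * intros x Hx. assert (In x (D1 ++ t :: D2)).
        { apply in_app_or in Hx; apply in_or_app; simpl; tauto. }
        destruct (Hinc x H) as [->|?]; [contradiction|auto].
    + rewrite (IH D); auto.
      * lra.
      * intros x Hx. destruct (Hinc x Hx) as [->|?]; [contradiction|auto].
Qed.

Lemma exists_nodup (l : list X) : exists l', NoDup l' /\ forall x, In x l' <-> In x l.
Proof.
  induction l as [|a l [l' [H1 H2]]].
  - exists []. split; [constructor|simpl; tauto].
  - destruct (classic (In a l')).
    + exists l'. split; auto. intros x. rewrite H2. simpl. split; [auto|].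
      intros [<-|?]; auto. apply H2; auto.
    + exists (a :: l'). split; [constructor; auto|]. intros x; simpl; rewrite H2; tauto.
Qed.

Lemma partition_ex (P : X -> Prop) (l : list X) : exists A Bl,
  Permutation l (A ++ Bl) /\ Forall P A /\ Forall (fun x => ~ P x) Bl.
Proof.
  induction l as [|a l [A [Bl [H1 [H2 H3]]]]].
  - exists [], []. simpl. auto.
  - destruct (classic (P a)).
    + exists (a :: A), Bl. simpl. split; [constructor; auto| split; auto].
    + exists A, (a :: Bl). split; [|split; auto].
      apply Permutation_trans with (a :: A ++ Bl); [constructor; auto|].
      apply Permutation_middle.
Qed.

Lemma NoDup_map_on {Y : Type} (g : X -> Y) l :
  (forall x y, In x l -> In y l -> g x = g y -> x = y) -> NoDup l -> NoDup (map g l).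
Proof.
  intros Hi Hn. induction Hn as [|a l Ha Hn IH]; simpl; constructor.
  - intros Hm. apply in_map_iff in Hm. destruct Hm as [y [Hy1 Hy2]].
    assert (y = a) by (apply Hi; simpl; auto). subst; contradiction.
  - apply IH. intros; apply Hi; simpl; auto.
Qed.

Lemma count_le {Y : Type} (eqd : forall a b : Y, {a = b} + {a <> b})
  (enc : X -> Y) (h : X -> R) (l : list X) : NoDup l ->
  (forall x y, In x l -> In y l -> enc x = enc y -> x = y) ->
  (forall x, In x l -> 0 <= h x <= 1) ->
  forall Bl, (forall x, In x l -> h x <> 0 -> In (enc x) Bl) ->
  lsum h l <= INR (length Bl).
Proof.
  intros Hn. induction Hn as [|a l Ha Hn IH]; intros Hi H01 Bl HB.
  - simpl. apply pos_INR.
  - rewrite lsum_cons. destruct (Req_dec (h a) 0) as [Hz|Hz].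
    + rewrite Hz. assert (lsum h l <= INR (length Bl)); [|lra].
      apply IH; auto. intros; apply Hi; simpl; auto. intros; apply H01; simpl; auto.
      intros; apply HB; simpl; auto.
    + assert (Hin : In (enc a) Bl) by (apply HB; simpl; auto).
      pose proof (remove_length_lt eqd Bl (enc a) Hin) as Hlt.
      assert (lsum h l <= INR (length (remove eqd (enc a) Bl))).
      { apply IH. intros; apply Hi; simpl; auto. intros; apply H01; simpl; auto.
        intros x Hx Hhx. apply in_in_remove.
        - intros He. assert (x = a) by (apply Hi; simpl; auto). subst; contradiction.
        - apply HB; simpl; auto. }
      pose proof (H01 a (or_introl eq_refl)).
      apply le_INR in Hlt. rewrite S_INR in Hlt. lra.
Qed.

End Gen.

Fixpoint fenum (n : nat) : list (Fin.t n) :=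
  match n with 0 => [] | S m => Fin.F1 :: map Fin.FS (fenum m) end.

Lemma fenum_all n (i : Fin.t n) : In i (fenum n).
Proof. induction i; simpl; [left; reflexivity | right; apply in_map; assumption]. Qed.

Lemma fenum_len n : length (fenum n) = n.
Proof. induction n; simpl; auto. rewrite length_map; auto. Qed.

Definition enc {d : nat} (x : pt d) : list Z := map x (fenum d).

Lemma map_eq_in {A B : Type} (x y : A -> B) l : map x l = map y l -> forall i, In i l -> x i = y i.
Proof.
  induction l; simpl; intros H i Hi; [contradiction|]. injection H; intros.
  destruct Hi as [<-|?]; auto.
Qed.

Lemma enc_inj {d : nat} (x y : pt d) : enc x = enc y -> x = y.
Proof.
  intros H. apply functional_extensionality. intros i. apply (map_eq_in x y (fenum d)); auto.
  apply fenum_all.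
Qed.

Fixpoint prodl (Is : list (list Z)) : list (list Z) :=
  match Is with nil => (nil :: nil) | J :: Is' => flat_map (fun z => map (cons z) (prodl Is')) J end.

Lemma prodl_in Is v : Forall2 (@In Z) v Is -> In v (prodl Is).
Proof.
  induction 1 as [|z J v Is' Hz Hv IH]; simpl; [auto|]. apply in_flat_map. exists z; split; auto. apply in_map; auto.
Qed.

Lemma flat_map_len {A : Type} (P : list (list A)) (J : list A) :
  length (flat_map (fun z => map (cons z) P) J) = (length J * length P)%nat.
Proof. induction J; simpl; auto. rewrite length_app, length_map, IHJ. reflexivity. Qed.

Lemma prodl_len Is m : (forall J, In J Is -> (length J <= m)%nat) -> (length (prodl Is) <= m ^ length Is)%nat.
Proof.
  induction Is; simpl; intros H; auto. rewrite flat_map_len.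
  apply Nat.mul_le_mono; auto.
Qed.

Definition zrange (lo hi : Z) : list Z :=
  map (fun k => lo + Z.of_nat k)%Z (seq 0 (Z.to_nat (hi - lo + 1))).

Lemma zrange_in lo hi z : (lo <= z <= hi)%Z -> In z (zrange lo hi).
Proof.
  intros H. apply in_map_iff. exists (Z.to_nat (z - lo)). split; [lia|]. apply in_seq. lia.
Qed.

Lemma zrange_len lo hi : length (zrange lo hi) = Z.to_nat (hi - lo + 1).
Proof. unfold zrange. rewrite length_map, length_seq. reflexivity. Qed.

Fixpoint dpairs {d : nat} (l : list (pt d)) : list (pt d * pt d) :=
  match l with a :: ((b :: _) as t) => (a, b) :: (b, a) :: dpairs t | _ => [] end.

Lemma dpairs_comp {d : nat} (l : list (pt d)) p : In p (dpairs l) -> In (fst p) l /\ In (snd p) l.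
Proof.
  induction l as [|a t IH]; simpl; [tauto|]. destruct t as [|b t']; [simpl; tauto|].
  intros [<-|[<-|Hp]]; simpl; auto. specialize (IH Hp). simpl in IH. tauto.
Qed.

Lemma dpairs_nodup {d : nat} (l : list (pt d)) : NoDup l -> NoDup (dpairs l).
Proof.
  induction l as [|a t IH]; simpl; intros Hn; [constructor|]. destruct t as [|b t']; [constructor|].
  inversion Hn as [|? ? Ha Ht]; subst. specialize (IH Ht).
  constructor.
  - intros [H|H].
    + injection H; intros. subst. apply Ha; simpl; auto.
    + apply dpairs_comp in H. simpl in *. tauto.
  - constructor; auto. intros H. apply dpairs_comp in H. simpl in *. tauto.
Qed.

Lemma dpairs_edge {d : nat} (E : pt d -> pt d -> Prop) w nu l p :
  (forall x y, E x y -> E y x) -> path_edges_ok E w nu l -> In p (dpairs l) -> E (fst p) (snd p).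
Proof.
  intros Hs. induction l as [|a t IH]; simpl; [tauto|]. destruct t as [|b t']; [simpl; tauto|].
  intros [He [_ Hok]] [<-|[<-|Hp]]; simpl; auto.
Qed.

Lemma last_irrel {A : Type} (z : A) t d1 d2 : last (z :: t) d1 = last (z :: t) d2.
Proof. revert z; induction t as [|a t IH]; intros z; [reflexivity|]. exact (IH a). Qed.

Lemma alg1 nu m V W u v : 0 < nu -> 0 <= m -> 0 <= V -> nu * v ^ 2 <= m * V -> nu * u ^ 2 <= W ->
  nu * (u + v) ^ 2 <= (m + 1) * (W + V).
Proof.
  intros Hnu Hm HV H1 H2. destruct (Req_dec m 0) as [->|Hm0].
  - rewrite Rmult_0_l in H1.
    assert (Hv : v * v <= 0).
    { destruct (Rle_or_lt (v*v) 0) as [?|Hc]; auto. exfalso.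
      assert (0 < nu * (v * v)) by (apply Rmult_lt_0_compat; auto). simpl in H1. lra. }
    assert (v = 0) by nra. subst. simpl in *. nra.
  - assert (Hmp : 0 < m) by lra.
    assert (He : m * (m * nu * u ^ 2 + V - 2 * nu * u * v) = nu * (m * u - v) ^ 2 + (m * V - nu * v ^ 2)) by ring.
    assert (H4 : 0 <= nu * (m * u - v) ^ 2).
    { apply Rmult_le_pos; [lra| apply pow2_ge_0]. }
    assert (H5 : 0 <= m * nu * u ^ 2 + V - 2 * nu * u * v).
    { destruct (Rle_or_lt 0 (m * nu * u ^ 2 + V - 2 * nu * u * v)) as [?|Hc]; auto.
      assert (m * (m * nu * u ^ 2 + V - 2 * nu * u * v) < 0) by (apply Rmult_pos_neg; auto). lra. }
    assert (Hf : (m + 1) * (W + V) - nu * (u + v) ^ 2 =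
       (m + 1) * (W - nu * u ^ 2) + (m * nu * u ^ 2 + V - 2 * nu * u * v) + (m * V - nu * v ^ 2)) by ring.
    assert (0 <= (m + 1) * (W - nu * u ^ 2)) by (apply Rmult_le_pos; lra).
    lra.
Qed.

Lemma eterm_nonneg {d : nat} (w : pt d -> pt d -> R) f p : 0 <= w (fst p) (snd p) -> 0 <= energy_term w f p.
Proof.
  intros H. unfold energy_term. apply Rmult_le_pos; [apply Rmult_le_pos; [lra|auto]|apply pow2_ge_0].
Qed.

Lemma path_cs {d : nat} (E : pt d -> pt d -> Prop) w nu (f : pt d -> R) :
  0 < nu -> (forall x y, E x y -> w x y = w y x) -> (forall x y, E x y -> 0 < w x y) ->
  (forall x y, E x y -> E y x) ->
  forall t y, path_edges_ok E w nu (y :: t) ->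
  nu * (f y - f (last (y :: t) y)) ^ 2 <= INR (length t) * lsum (energy_term w f) (dpairs (y :: t)).
Proof.
  intros Hnu Hsym Hpos Hes. induction t as [|z t' IH]; intros y Hok.
  - simpl. replace (f y - f y) with 0 by ring. lra.
  - destruct Hok as [Hyz [Hwyz Hok]].
    specialize (IH z Hok).
    change (last (y :: z :: t') y) with (last (z :: t') y).
    rewrite (last_irrel z t' y z).
    change (dpairs (y :: z :: t')) with ((y, z) :: (z, y) :: dpairs (z :: t')).
    rewrite !lsum_cons. change (length (z :: t')) with (S (length t')). rewrite S_INR.
    unfold energy_term at 1 2; simpl fst; simpl snd.
    rewrite <- (Hsym y z Hyz).
    assert (HV : 0 <= lsum (energy_term w f) (dpairs (z :: t'))).
    { apply lsum_nonneg. intros p Hp. apply eterm_nonneg.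
      apply Rlt_le, Hpos. apply (dpairs_edge E w nu (z :: t')); auto. }
    set (V := lsum (energy_term w f) (dpairs (z :: t'))) in *. clearbody V.
    replace (f y - f (last (z :: t') z)) with ((f y - f z) + (f z - f (last (z :: t') z))) by ring.
    replace (/ 2 * w y z * (f y - f z) ^ 2 + (/ 2 * w y z * (f z - f y) ^ 2 + V))
      with (w y z * (f y - f z) ^ 2 + V) by field.
    apply alg1; auto. apply pos_INR.
    apply Rmult_le_compat_r; [apply pow2_ge_0| lra].
Qed.

Lemma adj_coord {d : nat} (a b : pt d) : lattice_adj a b -> forall j, (Z.abs (a j - b j) <= 1)%Z.
Proof.
  intros [i [H1 H2]] j. destruct (classic (j = i)) as [->|Hn]; [lia|]. rewrite (H2 j Hn). lia.
Qed.

Lemma path_box {d : nat} (E : pt d -> pt d -> Prop) w nu :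
  (forall a b, E a b -> forall j, (Z.abs (a j - b j) <= 1)%Z) ->
  forall t y, path_edges_ok E w nu (y :: t) ->
  forall (c : pt d) (k : Z), (forall j, Z.abs (c j - y j) <= k)%Z ->
  forall p, In p (dpairs (y :: t)) -> forall j,
  (Z.min (fst p j) (snd p j) - (k + Z.of_nat (length t) - 1) <= c j <=
   Z.max (fst p j) (snd p j) + (k + Z.of_nat (length t) - 1))%Z.
Proof.
  intros Hadj. induction t as [|z t' IH]; intros y Hok c k Hc p Hp j.
  - simpl in Hp. contradiction.
  - destruct Hok as [Hyz [_ Hok]]. pose proof (Hadj y z Hyz j) as Hyzj. pose proof (Hc j) as Hcj.
    change (dpairs (y :: z :: t')) with ((y, z) :: (z, y) :: dpairs (z :: t')) in Hp.
    change (length (z :: t')) with (S (length t')).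
    destruct Hp as [<-|[<-|Hp]]; simpl fst; simpl snd; try lia.
    destruct t' as [|u t'']; [simpl in Hp; contradiction|].
    assert (Hc' : forall j, (Z.abs (c j - z j) <= k + 1)%Z).
    { intros j'. pose proof (Hadj y z Hyz j'). pose proof (Hc j'). lia. }
    specialize (IH z Hok c (k + 1)%Z Hc' p Hp j). lia.
Qed.

Lemma Forall2_map_in {A : Type} (x : A -> Z) (J : A -> list Z) l :
  (forall j, In j l -> In (x j) (J j)) -> Forall2 (@In Z) (map x l) (map J l).
Proof. induction l; simpl; intros H; constructor; auto. Qed.

Lemma double_count {d : nat} (E : pt d -> pt d -> Prop) w nu (f : pt d -> R)
  (X2 : list (pt d)) (lp : pt d -> list (pt d)) (N : Z) (T2 : list (pt d * pt d)) :
  (forall x y, E x y -> E y x) -> (forall x y, E x y -> 0 < w x y) ->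
  (forall a b, E a b -> forall j, (Z.abs (a j - b j) <= 1)%Z) ->
  NoDup X2 -> NoDup T2 -> (0 <= N)%Z ->
  (forall p, In p T2 -> exists x, In x X2 /\ In p (dpairs (lp x))) ->
  (forall x, In x X2 -> exists t, lp x = x :: t /\ NoDup (lp x) /\ path_edges_ok E w nu (lp x)
      /\ (Z.of_nat (length t) <= N)%Z) ->
  (forall x p, In x X2 -> In p (dpairs (lp x)) -> In p T2) ->
  lsum (fun x => lsum (energy_term w f) (dpairs (lp x))) X2 <=
    INR (Z.to_nat (2 * N)) ^ d * lsum (energy_term w f) T2.
Proof.
  intros Hes Hpos Hadj HX HT HN HT2a Hlp HT2b.
  set (g := energy_term w f).
  assert (Hg : forall p, In p T2 -> 0 <= g p).
  { intros p Hp. destruct (HT2a p Hp) as [x [Hx Hpx]]. destruct (Hlp x Hx) as [t [_ [_ [Hok _]]]].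
    apply eterm_nonneg. apply Rlt_le, Hpos. apply (dpairs_edge E w nu (lp x)); auto. }
  rewrite (lsum_ext _ (fun x => lsum (fun p => indp (In p (dpairs (lp x))) * g p) T2)).
  2: { intros x Hx. destruct (Hlp x Hx) as [t [_ [Hnd _]]]. apply lsum_ind; auto.
       apply dpairs_nodup; auto. intros p Hp; eauto. }
  rewrite lsum_swap.
  rewrite (lsum_ext _ (fun p => lsum (fun x => indp (In p (dpairs (lp x)))) X2 * g p)).
  2: { intros p Hp. apply lsum_scalr. }
  rewrite <- lsum_scal. apply lsum_le. intros p Hp.
  apply Rmult_le_compat_r; [apply Hg; auto|].
  destruct (HT2a p Hp) as [x0 [Hx0 Hpx0]].
  assert (Hp01 : forall j, (Z.abs (fst p j - snd p j) <= 1)%Z).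
  { destruct (Hlp x0 Hx0) as [t [_ [_ [Hok _]]]]. apply Hadj.
    apply (dpairs_edge E w nu (lp x0)); auto. }
  set (lo := fun j => (Z.min (fst p j) (snd p j) - (N - 1))%Z).
  set (hi := fun j => (Z.max (fst p j) (snd p j) + (N - 1))%Z).
  set (Bl := prodl (map (fun j => zrange (lo j) (hi j)) (fenum d))).
  apply Rle_trans with (INR (length Bl)).
  - apply (count_le (list_eq_dec Z.eq_dec) enc); auto.
    + intros; apply enc_inj; auto.
    + intros x _. unfold indp. destruct (cdec _); lra.
    + intros x Hx Hi. unfold indp in Hi. destruct (cdec _) as [Hin|]; [|lra].
      destruct (Hlp x Hx) as [t [Hl [_ [Hok Ht]]]].
      rewrite Hl in Hin, Hok.
      unfold Bl, enc. apply prodl_in. apply Forall2_map_in. intros j _.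
      apply zrange_in.
      assert (Hc : forall j, (Z.abs (x j - x j) <= 0)%Z) by (intros; lia).
      pose proof (path_box E w nu Hadj t x Hok x 0%Z Hc p Hin j). unfold lo, hi. lia.
  - rewrite <- pow_INR. apply le_INR. unfold Bl.
    pose proof (prodl_len (map (fun j => zrange (lo j) (hi j)) (fenum d)) (Z.to_nat (2 * N))) as HH.
    rewrite length_map, fenum_len in HH. apply HH.
    intros J HJ. apply in_map_iff in HJ. destruct HJ as [j [<- _]].
    rewrite zrange_len. unfold lo, hi. pose proof (Hp01 j). lia.
Qed.

Theorem lemma4p1 (d : nat) (hd : (2 <= d)%nat)
  (V : pt d -> Prop) (E : pt d -> pt d -> Prop)
  (hG : lattice_subgraph V E)
  (w : pt d -> pt d -> R)
  (hw_sym : forall x y, E x y -> w x y = w y x)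
  (hw_pos : forall x y, E x y -> 0 < w x y)
  (VC : pt d -> Prop) (EC : pt d -> pt d -> Prop)
  (hC : subgraph VC EC V E)
  (nu L : R) (hnu : 0 < nu) (hL : 0 < L)
  (B : pt d -> Prop) (hB : forall x, B x -> V x)
  (mu : R) (hmu : 0 < mu)
  (hi : forall f : pt d -> R, supp_in f B ->
        nnsum_ge (energy_index VC EC) (energy_term w f) mu VC (sq f))
  (phi : pt d -> pt d)
  (hphi_inj : forall x y, B x -> ~ VC x -> B y -> ~ VC y -> phi x = phi y -> x = y)
  (hphi_in : forall x, B x -> ~ VC x -> VC (phi x))
  (hpath : forall x, B x -> ~ VC x ->
           exists l : list (pt d), good_path E w nu x (phi x) l /\
             INR (length l - 1) <= L) :
  forall f : pt d -> R, supp_in f B ->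
    nnsum_ge (energy_index V E) (energy_term w f)
      (/ ((2 * L) ^ (d + 1) * / nu + 3 * / mu)) V (sq f).
Proof.
  intros f hf S HS HSV eps Heps.
  destruct hG as [hEs hEV].
  destruct hC as [hCV [hCE [_ hCVV]]].
  assert (hadj : forall a b, E a b -> forall j, (Z.abs (a j - b j) <= 1)%Z).
  { intros a b Hab. apply adj_coord. apply (hEV a b Hab). }
  set (g := energy_term w f).
  assert (hg : forall p, E (fst p) (snd p) -> 0 <= g p).
  { intros p Hp. apply eterm_nonneg. apply Rlt_le, hw_pos; auto. }
  assert (Hlp : exists lp : pt d -> list (pt d), forall x, B x -> ~ VC x ->
     good_path E w nu x (phi x) (lp x) /\ INR (length (lp x) - 1) <= L).
  { exists (fun x => match cdec (B x /\ ~ VC x) with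
       | left H => proj1_sig (constructive_indefinite_description _ (hpath x (proj1 H) (proj2 H)))
       | right _ => [] end).
    intros x Hb Hv. destruct (cdec (B x /\ ~ VC x)) as [H|H]; [|tauto].
    destruct (constructive_indefinite_description _ _) as [l Hl]. exact Hl. }
  destruct Hlp as [lp Hlp].
  destruct (partition_ex VC S) as [Y [X [HpS [FY FX]]]].
  assert (HYX : NoDup (Y ++ X)) by (apply (Permutation_NoDup HpS); auto).
  assert (HY : NoDup Y) by (apply NoDup_app_remove_r with X; auto).
  assert (HX : NoDup X) by (apply NoDup_app_remove_l with Y; auto).
  destruct (partition_ex (fun x => f x = 0) X) as [X0 [X2 [HpX [FX0 FX2]]]].
  assert (HX02 : NoDup (X0 ++ X2)) by (apply (Permutation_NoDup HpX); auto).
  assert (HX2 : NoDup X2) by (apply NoDup_app_remove_l with X0; auto).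
  assert (HX2p : forall x, In x X2 -> B x /\ ~ VC x).
  { intros x Hx. rewrite Forall_forall in FX2, FX. split.
    - apply hf. apply FX2; auto.
    - apply FX. apply (Permutation_in _ (Permutation_sym HpX)). apply in_or_app; auto. }
  assert (HsumS : lsum (sq f) S = lsum (sq f) Y + lsum (sq f) X2).
  { rewrite (lsum_perm _ _ _ HpS), lsum_app, (lsum_perm _ _ _ HpX), lsum_app.
    rewrite (lsum_zero _ X0); [lra|]. intros x Hx. rewrite Forall_forall in FX0.
    unfold sq. rewrite (FX0 x Hx). simpl; ring. }
  set (Zl := map phi X2).
  assert (HZ : NoDup Zl).
  { apply NoDup_map_on; auto. intros x y Hx Hy. destruct (HX2p x Hx), (HX2p y Hy). apply hphi_inj; auto. }
  destruct (exists_nodup (Y ++ Zl)) as [S3 [HS3 HS3i]].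
  assert (FS3 : Forall VC S3).
  { rewrite Forall_forall. intros x Hx. apply HS3i in Hx. apply in_app_or in Hx. destruct Hx as [Hx|Hx].
    - rewrite Forall_forall in FY. auto.
    - unfold Zl in Hx. apply in_map_iff in Hx. destruct Hx as [y [<- Hy]]. destruct (HX2p y Hy). auto. }
  destruct (hi f hf S3 HS3 FS3 eps Heps) as [T1 [HT1 [FT1 H1]]].
  fold g in H1.
  destruct (exists_nodup (flat_map (fun x => dpairs (lp x)) X2)) as [T2 [HT2 HT2i]].
  destruct (exists_nodup (T1 ++ T2)) as [T [HT HTi]].
  exists T. split; [auto|].
  assert (HTE : forall p, In p T -> energy_index V E p).
  { intros p Hp. apply HTi in Hp. apply in_app_or in Hp. destruct Hp as [Hp|Hp].
    - rewrite Forall_forall in FT1. destruct (FT1 p Hp) as [Hv He]. split; auto.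
    - apply HT2i in Hp. apply in_flat_map in Hp. destruct Hp as [x [Hx Hpx]].
      destruct (HX2p x Hx) as [Hb Hv]. destruct (Hlp x Hb Hv) as [[_ [_ [_ [_ Hok]]]] _].
      assert (He : E (fst p) (snd p)) by (apply (dpairs_edge E w nu (lp x)); auto).
      split; [apply (hEV _ _ He)|auto]. }
  split; [rewrite Forall_forall; auto|].
  assert (HgT : forall p, In p T -> 0 <= g p) by (intros p Hp; apply hg; apply HTE; auto).
  assert (Hsq : forall x, 0 <= sq f x) by (intros; unfold sq; apply pow2_ge_0).
  assert (I1 : lsum (sq f) Y <= lsum (sq f) S3).
  { apply lsum_sub; auto. intros x Hx; right; apply HS3i; apply in_or_app; auto. }
  assert (I2 : lsum (sq f) Zl <= lsum (sq f) S3).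
  { apply lsum_sub; auto. intros x Hx; right; apply HS3i; apply in_or_app; auto. }
  assert (I3 : lsum g T1 <= lsum g T).
  { apply lsum_sub; auto. intros x Hx; right; apply HTi; apply in_or_app; auto. }
  assert (I3' : lsum g T2 <= lsum g T).
  { apply lsum_sub; auto. intros x Hx; right; apply HTi; apply in_or_app; auto. }
  destruct (archimed L) as [HL1 HL2].
  set (N := (up L - 1)%Z).
  assert (HN0 : (0 <= N)%Z).
  { assert (0 < up L)%Z by (apply lt_IZR; simpl; lra). unfold N; lia. }
  assert (HNL : IZR N <= L) by (unfold N; rewrite minus_IZR; simpl; lra).
  assert (I4 : lsum (sq f) X2 <= 2 * lsum (sq f) Zl +
                 2 * (L / nu) * lsum (fun x => lsum g (dpairs (lp x))) X2).
  { unfold Zl. rewrite lsum_map. rewrite <- !lsum_scal, <- lsum_plus. apply lsum_le. intros x Hx.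
    destruct (HX2p x Hx) as [Hb Hv]. destruct (Hlp x Hb Hv) as [[Hh [Hlast [Hne [Hnd Hok]]]] Hlen].
    destruct (lp x) as [|x' t] eqn:El; [contradiction|]. simpl in Hh. injection Hh as ->.
    pose proof (path_cs E w nu f hnu hw_sym hw_pos hEs t x Hok) as Hcs.
    rewrite Hlast in Hcs. simpl in Hlen. rewrite Nat.sub_0_r in Hlen.
    assert (HH : 0 <= lsum g (dpairs (x :: t))).
    { apply lsum_nonneg. intros p Hp. apply hg. apply (dpairs_edge E w nu (x :: t)); auto. }
    fold g in Hcs.
    assert (Hd : (f x - f (phi x)) ^ 2 <= L / nu * lsum g (dpairs (x :: t))).
    { unfold Rdiv. apply Rmult_le_reg_l with nu; auto.
      replace (nu * (L * / nu * lsum g (dpairs (x :: t)))) with (L * lsum g (dpairs (x :: t)))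
        by (field; lra).
      apply Rle_trans with (1 := Hcs). apply Rmult_le_compat_r; auto. }
    unfold sq. assert (f x ^ 2 <= 2 * f (phi x) ^ 2 + 2 * (f x - f (phi x)) ^ 2).
    { assert (Heq : 2 * f (phi x) ^ 2 + 2 * (f x - f (phi x)) ^ 2 - f x ^ 2 = (f x - 2 * f (phi x)) ^ 2) by ring.
      pose proof (pow2_ge_0 (f x - 2 * f (phi x))). lra. }
    lra. }
  assert (I5 : lsum (fun x => lsum g (dpairs (lp x))) X2 <= INR (Z.to_nat (2 * N)) ^ d * lsum g T2).
  { apply (double_count E w nu f X2 lp N T2); auto.
    - intros p Hp. apply HT2i in Hp. apply in_flat_map in Hp. exact Hp.
    - intros x Hx. destruct (HX2p x Hx) as [Hb Hv].
      destruct (Hlp x Hb Hv) as [[Hh [Hlast [Hne [Hnd Hok]]]] Hlen].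
      destruct (lp x) as [|x' t] eqn:El; [contradiction|]. simpl in Hh. injection Hh as ->.
      exists t. repeat split; auto. simpl in Hlen. rewrite Nat.sub_0_r in Hlen.
      assert (Hlt : IZR (Z.of_nat (length t)) < IZR (up L)) by (rewrite <- INR_IZR_INZ; lra).
      apply lt_IZR in Hlt. unfold N. lia.
    - intros x p Hx Hp. apply HT2i. apply in_flat_map. eauto. }
  assert (HM : INR (Z.to_nat (2 * N)) ^ d <= (2 * L) ^ d).
  { apply pow_incr. rewrite INR_IZR_INZ, Z2Nat.id by lia. rewrite mult_IZR.
    split; [apply IZR_le in HN0; simpl in HN0; lra| lra]. }
  assert (HM0 : 0 <= INR (Z.to_nat (2 * N)) ^ d) by (apply pow_le, pos_INR).
  set (M := INR (Z.to_nat (2 * N)) ^ d) in *.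
  set (P := (2 * L) ^ d) in *.
  set (Hs := lsum (fun x => lsum g (dpairs (lp x))) X2) in *.
  set (t := lsum g T) in *.
  set (t2 := lsum g T2) in *.
  set (t1 := lsum g T1) in *.
  set (s3 := lsum (sq f) S3) in *.
  assert (Ht2 : 0 <= t2) by (apply lsum_nonneg; intros p Hp; apply HgT, HTi, in_or_app; auto).
  assert (Hst : Hs <= P * t).
  { apply Rle_trans with (1 := I5). apply Rmult_le_compat; auto. }
  assert (Hs3 : s3 <= / mu * (t + eps)).
  { apply Rmult_le_reg_l with mu; auto. rewrite <- Rmult_assoc, Rinv_r by lra. lra. }
  assert (HLnu : 0 <= L / nu) by (unfold Rdiv; apply Rmult_le_pos; [lra| apply Rlt_le, Rinv_0_lt_compat; auto]).
  assert (Hpow : (2 * L) ^ (d + 1) * / nu = 2 * (L / nu) * P).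
  { unfold P. rewrite pow_add. simpl. field. lra. }
  rewrite Hpow. fold (sq f) in *.
  assert (Hmu : 0 < / mu) by (apply Rinv_0_lt_compat; auto).
  assert (HP0 : 0 <= P) by (unfold P; apply pow_le; lra).
  assert (Ha : lsum (sq f) S <= (2 * (L / nu) * P + 3 * / mu) * t + 3 * / mu * eps).
  { rewrite HsumS.
    assert (2 * (L / nu) * Hs <= 2 * (L / nu) * (P * t)) by (apply Rmult_le_compat_l; lra).
    assert (3 * s3 <= 3 * (/ mu * (t + eps))) by lra.
    nra. }
  set (K := 2 * (L / nu) * P + 3 * / mu) in *.
  assert (HK : 0 < K) by (unfold K; nra).
  apply Rmult_le_reg_l with K; auto.
  rewrite <- Rmult_assoc, Rinv_r by lra. rewrite Rmult_1_l.
  assert (3 * / mu * eps <= K * eps) by (apply Rmult_le_compat_r; [lra| unfold K; nra]).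
  nra.
Qed.
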